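(* Let $\mathbf{a}_1,\mathbf{a}_2\in G(t)$ with $\mathbf{a}_1\mathbf{a}_2\neq\mathbf{a}_2\mathbf{a}_1$. Then for any $t_{13},t_{23}\in\mathbb{C}$ with $t_{13}\notin\{t_{23},\,t^2-t_{23}\}$, there exists $\mathbf{a}_3\in G(t)$ such that $\mathrm{tr}(\mathbf{a}_1\mathbf{a}_3)=t_{13}$ and $\mathrm{tr}(\mathbf{a}_2\mathbf{a}_3)=t_{23}$.
   Context: $G=\mathrm{SL}(2,\mathbb{C})$ and, for $t\in\mathbb{C}$, $G(t)=\{\mathbf{x}\in G:\mathrm{tr}(\mathbf{x})=t\}$. *)

(* Defs.v *)
From mathcomp Require Import all_boot all_order all_algebra.
From mathcomp Require Import complex.
From mathcomp Require Import Rstruct.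
Set Implicit Arguments. Unset Strict Implicit. Unset Printing Implicit Defensive.
Import GRing.Theory Num.Theory.
Local Open Scope ring_scope.

Notation CC := (complex Rdefinitions.R).

Definition in_SL2 (x : 'M[CC]_2) : Prop := \det x = 1.
Definition in_Gt (t : CC) (x : 'M[CC]_2) : Prop := in_SL2 x /\ \tr x = t.

(* Main.v *)
Require Import Defs.
From mathcomp Require Import all_boot all_order all_algebra.
From mathcomp Require Import complex Rstruct.
From mathcomp Require Import ring lra.
Import GRing.Theory Num.Theory.
Local Open Scope ring_scope.
Section Core.
Variable F : numClosedFieldType.
Implicit Types a b c e f k x y z p q g : F.

Definition Bf a b c x y z := 2*a*x + b*z + c*y.
Definition Qf x y z := x^+2 + y*z.

Lemma exists_m a b c e f k :
  ~ (b*k - c*f = 0 /\ 2*(a*f - b*e) = 0 /\ 2*(c*e - a*k) = 0) ->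
  exists x y z, Bf a b c x y z = 0 /\ Bf e f k x y z != 0.
Proof.
move=> hn.
case: (eqVneq (b*k - c*f) 0) => h1.
  case: (eqVneq (2*(a*f - b*e)) 0) => h2.
    case: (eqVneq (2*(c*e - a*k)) 0) => h3; first by exfalso; apply: hn.
    exists c, (-2*a), 0; split; rewrite /Bf.
      by ring.
    by move: h3; congr (_ != _); ring.
  exists b, 0, (-2*a); split; rewrite /Bf.
    by ring.
  by rewrite -oppr_eq0; move: h2; congr (_ != _); ring.
exists 0, b, (-c); split; rewrite /Bf.
  by ring.
by move: h1; congr (_ != _); ring.
Qed.

Lemma sq0 (x : F) : x^+2 = 0 -> x = 0.
Proof. by move/eqP; rewrite expf_eq0 /= => /eqP. Qed.

Lemma core a b c e f k p q g :
  a^+2 + b*c = g -> e^+2 + f*k = g ->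
  ~ (b*k - c*f = 0 /\ 2*(a*f - b*e) = 0 /\ 2*(c*e - a*k) = 0) ->
  p != q -> p != -q ->
  exists x y z, Bf a b c x y z = p /\ Bf e f k x y z = q /\ Qf x y z = g.
Proof.
move=> hu hv hn hpq hpq'.
set n1 := b*k - c*f; set n2 := 2*(a*f - b*e); set n3 := 2*(c*e - a*k).
set hh := a*e + (b*k + c*f)/2.
have Qn : Qf n1 n2 n3 = 4 * (hh^+2 - g^+2).
  have -> : g^+2 = (a^+2 + b*c) * (e^+2 + f*k) by rewrite hu hv.
  by rewrite /Qf /n1 /n2 /n3 /hh; field.
have Bun x y z : Bf a b c (x*a + y*e + z*n1) (x*b + y*f + z*n2) (x*c + y*k + z*n3)
   = 2*x*g + 2*y*hh.
  by rewrite -hu /Bf /n1 /n2 /n3 /hh; field.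
have Bvn x y z : Bf e f k (x*a + y*e + z*n1) (x*b + y*f + z*n2) (x*c + y*k + z*n3)
   = 2*x*hh + 2*y*g.
  by rewrite -hv /Bf /n1 /n2 /n3 /hh; field.
have Qw x y z : Qf (x*a + y*e + z*n1) (x*b + y*f + z*n2) (x*c + y*k + z*n3)
   = x^+2*g + y^+2*g + z^+2 * Qf n1 n2 n3 + 2*x*y*hh.
  have -> : x^+2*g + y^+2*g = x^+2*(a^+2 + b*c) + y^+2*(e^+2 + f*k) by rewrite hu hv.
  by rewrite /Qf /n1 /n2 /n3 /hh; field.
case: (eqVneq (g^+2 - hh^+2) 0) => hD; last first.
  set D := g^+2 - hh^+2.
  set al := (p*g - q*hh)/(2*D).
  set be := (q*g - p*hh)/(2*D).
  set R := (g - (al^+2*g + be^+2*g + 2*al*be*hh)) / (-4*D).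
  exists (al*a + be*e + sqrtC R*n1), (al*b + be*f + sqrtC R*n2),
         (al*c + be*k + sqrtC R*n3).
  rewrite Bun Bvn Qw Qn sqrtCK /R /al /be /D; split; last split.
  - field; exact: hD.
  - field; exact: hD.
  - field; rewrite ?hD //.
have gN0 : g != 0.
  apply/eqP => g0; apply: hn.
  have hh0 : hh = 0 by apply: sq0; move/eqP: hD; rewrite g0 expr0n /= sub0r oppr_eq0 => /eqP.
  have e1 : n1^+2 = (2*hh - 2*a*e)^+2 - 4*((a^+2 + b*c) - a^+2)*((e^+2 + f*k) - e^+2).
    by rewrite /n1 /hh; field.
  have e2 : n2^+2 = 4*(- b*f*(2*hh) + f^+2*(a^+2 + b*c) + b^+2*(e^+2 + f*k)).
    by rewrite /n2 /hh; field.
  have e3 : n3^+2 = 4*(- c*k*(2*hh) + k^+2*(a^+2 + b*c) + c^+2*(e^+2 + f*k)).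
    by rewrite /n3 /hh; field.
  rewrite hu hv g0 hh0 in e1 e2 e3.
  split; first by apply: sq0; rewrite e1; ring.
  split; first by apply: sq0; rewrite e2; ring.
  by apply: sq0; rewrite e3; ring.
have [mx [my [mz [hm1 hm2]]]] := exists_m _ _ _ _ _ _ hn.
set la := (q - p*hh/g) / Bf e f k mx my mz.
set x0 := p/(2*g)*a + la*mx.
set y0 := p/(2*g)*b + la*my.
set z0 := p/(2*g)*c + la*mz.
have B0u : Bf a b c x0 y0 z0 = p.
  have -> : Bf a b c x0 y0 z0 = p/(2*g) * (2*(a^+2 + b*c)) + la * Bf a b c mx my mz.
    by rewrite /x0 /y0 /z0 /Bf; ring.
  by rewrite hm1 hu; field.
have B0v : Bf e f k x0 y0 z0 = q.
  have -> : Bf e f k x0 y0 z0 = p/(2*g) * (2*hh) + la * Bf e f k mx my mz.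
    by rewrite /x0 /y0 /z0 /Bf /hh; field.
  by rewrite /la; field; rewrite hm2 gN0.
have Gram : (Bf x0 y0 z0 n1 n2 n3)^+2 = -2 * (
   (2*(a^+2+b*c))*((2*(e^+2+f*k))*(2*Qf x0 y0 z0) - (Bf e f k x0 y0 z0)^+2)
   - (2*hh)*((2*hh)*(2*Qf x0 y0 z0) - (Bf a b c x0 y0 z0)*(Bf e f k x0 y0 z0))
   + (Bf a b c x0 y0 z0)*((2*hh)*(Bf e f k x0 y0 z0) - (2*(e^+2+f*k))*(Bf a b c x0 y0 z0))).
  by rewrite /Bf /Qf /n1 /n2 /n3 /hh; field.
rewrite hu hv B0u B0v in Gram.
have hh2 : hh^+2 = g^+2 by apply/eqP; rewrite eq_sym -subr_eq0 hD.
have BnN : Bf x0 y0 z0 n1 n2 n3 != 0.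
  have E : (Bf x0 y0 z0 n1 n2 n3)^+2 = 4*g*(p^+2 + q^+2) - 8 * hh * p * q
      - 16 * Qf x0 y0 z0 * (g^+2 - hh^+2).
  rewrite Gram. ring.
  rewrite hD mulr0 subr0 in E.
  apply/eqP => E0; rewrite E0 expr2 mulr0 in E.
  move/eqP: hh2; rewrite -subr_eq0 subr_sqr mulf_eq0 => /orP[] /eqP H.
    have hhE : hh = g by apply/eqP; rewrite -subr_eq0 H.
    move: E; rewrite hhE => E.
    have : 4*g*(p - q)^+2 = 0 by rewrite E; ring.
    by move/eqP; rewrite !mulf_eq0 subr_eq0 (negPf gN0) (negPf hpq) pnatr_eq0.
  have hhE : hh = -g by apply/eqP; rewrite -addr_eq0 H.
  move: E; rewrite hhE => E.
  have : 4*g*(p + q)^+2 = 0 by rewrite E; ring.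
  by move/eqP; rewrite !mulf_eq0 (addr_eq0 p q) (negPf gN0) (negPf hpq') pnatr_eq0.
set s := (g - Qf x0 y0 z0) / Bf x0 y0 z0 n1 n2 n3.
exists (x0 + s*n1), (y0 + s*n2), (z0 + s*n3).
have hBu : forall x y z, Bf a b c (x + s*n1) (y + s*n2) (z + s*n3) = Bf a b c x y z.
  by move=> x y z; rewrite /Bf /n1 /n2 /n3; ring.
have hBv : forall x y z, Bf e f k (x + s*n1) (y + s*n2) (z + s*n3) = Bf e f k x y z.
  by move=> x y z; rewrite /Bf /n1 /n2 /n3; ring.
rewrite hBu hBv B0u B0v; split => //; split => //.
have -> : Qf (x0 + s*n1) (y0 + s*n2) (z0 + s*n3) =
   Qf x0 y0 z0 + s * Bf x0 y0 z0 n1 n2 n3 + s^+2 * Qf n1 n2 n3.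
  by rewrite /Qf /Bf; ring.
rewrite Qn hh2 subrr mulr0 mulr0 addr0 /s; field; exact: BnN.
Qed.
End Core.
Lemma det2 (R : comNzRingType) (M : 'M[R]_2) : \det M = M 0 0 * M 1 1 - M 0 1 * M 1 0.
Proof.
rewrite (expand_det_row M 0) !big_ord_recl big_ord0 /cofactor !det_mx11 !mxE /=.
have e1 : M (lift 0 0) (lift ord0 0) = M 1 1 by congr (M _ _); apply: val_inj.
have e2 : M (lift 0 0) (lift (lift ord0 ord0) 0) = M 1 0 by congr (M _ _); apply: val_inj.
have e3 : M 0 (lift ord0 ord0) = M 0 1 by congr (M _ _); apply: val_inj.
rewrite e1 e2 e3 /bump /=. ring.
Qed.
Lemma tr2 (R : comNzRingType) (M : 'M[R]_2) : \tr M = M 0 0 + M 1 1.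
Proof. rewrite /mxtrace !big_ord_recl big_ord0 addr0; congr (_ + _); congr (M _ _); exact: val_inj. Qed.
Lemma mul2 (R : comNzRingType) (M N : 'M[R]_2) i j : (M *m N) i j = M i 0 * N 0 j + M i 1 * N 1 j.
Proof. rewrite mxE !big_ord_recl big_ord0 addr0; congr (_ * _ + _ * _); congr (_ _ _); exact: val_inj. Qed.
Lemma ord2 (i : 'I_2) : i = 0 \/ i = 1.
Proof. by case: i => [[|[|//]] h]; [left|right]; apply: val_inj. Qed.

Theorem mainTheorem2 (t : CC) (a1 a2 : 'M[CC]_2) :
  in_Gt t a1 -> in_Gt t a2 -> a1 *m a2 <> a2 *m a1 ->
  forall t13 t23 : CC, t13 <> t23 -> t13 <> t ^+ 2 - t23 ->
  exists a3 : 'M[CC]_2, in_Gt t a3 /\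
    \tr (a1 *m a3) = t13 /\ \tr (a2 *m a3) = t23.
Proof.
move=> [hd1 ht1] [hd2 ht2] hcomm t13 t23 h1 h2.
rewrite /in_SL2 det2 in hd1; rewrite /in_SL2 det2 in hd2; rewrite tr2 in ht1; rewrite tr2 in ht2.
have hu : ((a1 0 0 - a1 1 1)/2)^+2 + a1 0 1 * a1 1 0 = t^+2/4 - 1.
  have -> : t^+2/4 - 1 = t^+2/4 - (a1 0 0 * a1 1 1 - a1 0 1 * a1 1 0) by rewrite hd1.
  by rewrite -ht1; field.
have hv : ((a2 0 0 - a2 1 1)/2)^+2 + a2 0 1 * a2 1 0 = t^+2/4 - 1.
  have -> : t^+2/4 - 1 = t^+2/4 - (a2 0 0 * a2 1 1 - a2 0 1 * a2 1 0) by rewrite hd2.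
  by rewrite -ht2; field.
have hn : ~ (a1 0 1 * a2 1 0 - a1 1 0 * a2 0 1 = 0 /\
     2 * ((a1 0 0 - a1 1 1)/2 * a2 0 1 - a1 0 1 * ((a2 0 0 - a2 1 1)/2)) = 0 /\
     2 * (a1 1 0 * ((a2 0 0 - a2 1 1)/2) - (a1 0 0 - a1 1 1)/2 * a2 1 0) = 0).
  move=> [n1 [n2 n3]]; apply: hcomm; apply/matrixP => i j; rewrite !mul2.
  apply/eqP; rewrite -subr_eq0; apply/eqP.
  case: (ord2 i) => ->; case: (ord2 j) => ->.
  - by rewrite -n1; ring.
  - by rewrite -n2; field.
  - by rewrite -n3; field.
  - by transitivity (- (a1 0 1 * a2 1 0 - a1 1 0 * a2 0 1)); [ring | rewrite n1 oppr0].
have hpq : t13 - t^+2/2 != t23 - t^+2/2.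
  by apply/eqP => E; apply: h1; move: E => /eqP; rewrite (can_eq (subrK _)) => /eqP.
have hpq' : t13 - t^+2/2 != - (t23 - t^+2/2).
  by apply/eqP => E; apply: h2; rewrite -[t13](subrK (t^+2/2)) E; field.
have [x [y [z [hB1 [hB2 hQ]]]]] := core _ _ _ _ _ _ _ _ _ _ hu hv hn hpq hpq'.
rewrite /Bf in hB1 hB2; rewrite /Qf in hQ.
exists (\matrix_(i, j) (if i == 0 then (if j == 0 then t/2 + x else y)
                        else (if j == 0 then z else t/2 - x))).
rewrite /in_Gt /in_SL2 det2 tr2 !tr2 !mul2 !mxE /=.
split; first split.
- transitivity (t^+2/4 - (x^+2 + y*z)); first by field.
  by rewrite hQ; field.
- by field.
split.
- have -> : t13 = (t13 - t^+2/2) + t^+2/2 by ring.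
  by rewrite -hB1 -ht1; field.
- have -> : t23 = (t23 - t^+2/2) + t^+2/2 by ring.
  by rewrite -hB2 -ht2; field.
Qed.
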